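(* Let $V$ be a finite set, $s,t\in V$, $d$ an $st$-separating semi-metric on $V$, and $A\subseteq V$ nonempty. Define $f_A^{\pm}:V\to\mathbb R^2$ by $f_A^{\pm}(v)=(f_A^{+}(v),f_A^{-}(v))$ where $f_A^{\sigma}(v)=\tfrac12\left[d(v,s)+\sigma\, d(v,A)\right]$ for $\sigma\in\{+1,-1\}$ and $d(v,A)=\min_{a\in A}d(v,a)$. Then for all $u,v\in V$, \[\|f_A^{\pm}(u)-f_A^{\pm}(v)\|_1\le 2\,d(u,v).\]
   Context: A semi-metric on $V$ is a symmetric map $d:V\times V\to\mathbb R_{\ge0}$ with $d(v,v)=0$ satisfying the triangle inequality; it is $st$-separating if $d(s,t)=d(s,v)+d(v,t)$ for all $v\in V$. *)

(* Defs.v *)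
From mathcomp Require Import all_boot all_order all_algebra.
Set Implicit Arguments. Unset Strict Implicit. Unset Printing Implicit Defensive.
Import Order.TTheory GRing.Theory Num.Theory.
Local Open Scope ring_scope.

Definition semi_metric (R : realFieldType) (V : finType) (d : V -> V -> R) : Prop :=
  [/\ forall u v, 0 <= d u v,
      forall v, d v v = 0,
      forall u v, d u v = d v u &
      forall u v w, d u w <= d u v + d v w].

Definition st_separating (R : realFieldType) (V : finType) (d : V -> V -> R)
  (s t : V) : Prop := forall v, d s t = d s v + d v t.

(* d(v,A) = min_{a in A} d(v,a)  (A nonempty; junk value 0 if A is empty). *)
Definition dist_set (R : realFieldType) (V : finType) (d : V -> V -> R)
  (A : {set V}) (v : V) : R :=
  match [pick a in A] with
  | Some a0 => \big[Num.min/d v a0]_(a in A) d v a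
  | None => 0
  end.

Definition fA_plus (R : realFieldType) (V : finType) (d : V -> V -> R)
  (s : V) (A : {set V}) (v : V) : R := (d v s + dist_set d A v) / 2.
Definition fA_minus (R : realFieldType) (V : finType) (d : V -> V -> R)
  (s : V) (A : {set V}) (v : V) : R := (d v s - dist_set d A v) / 2.

Definition fA_pm_l1 (R : realFieldType) (V : finType) (d : V -> V -> R)
  (s : V) (A : {set V}) (u v : V) : R :=
  `|fA_plus d s A u - fA_plus d s A v| + `|fA_minus d s A u - fA_minus d s A v|.

(* Main.v *)
Require Import Defs.
From mathcomp Require Import all_boot all_order all_algebra.
From mathcomp Require Import lra.
Import Order.TTheory GRing.Theory Num.Theory.
Local Open Scope ring_scope.

Lemma dist_le (R : realFieldType) (V : finType) (d : V -> V -> R) (A : {set V}) v a :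
  a \in A -> dist_set d A v <= d v a.
Proof.
move=> aA; rewrite /dist_set; case: pickP => [a0 _|/(_ a)]; last by rewrite aA.
by rewrite (bigD1 a) //= ge_min lexx.
Qed.

Lemma dist_attained (R : realFieldType) (V : finType) (d : V -> V -> R) (A : {set V}) v :
  A != set0 -> exists2 a, a \in A & dist_set d A v = d v a.
Proof.
case/set0Pn=> x xA; rewrite /dist_set; case: pickP => [a0 a0A|/(_ x)]; last by rewrite xA.
elim/big_rec: _ => [|i m iA [b bA ->]]; first by exists a0.
by case: (leP (d v i) (d v b)) => _; [exists i|exists b].
Qed.

Lemma dist_lip (R : realFieldType) (V : finType) (d : V -> V -> R) (A : {set V}) u v :
  semi_metric d -> A != set0 -> dist_set d A u - dist_set d A v <= d u v.
Proof.
case=> _ _ _ tri nA; have [a aA ->] := @dist_attained _ _ d A v nA.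
have := @dist_le _ _ d A u a aA; have := tri u v a; lra.
Qed.

Theorem proposition2p8 (R : realFieldType) (V : finType) (s t : V)
  (d : V -> V -> R) (A : {set V}) :
  semi_metric d -> st_separating d s t -> A != set0 ->
  forall u v : V, fA_pm_l1 d s A u v <= 2 * d u v.
Proof.
move=> hm _ nA u v.
have h1 := @dist_lip _ _ d A u v hm nA; have h2 := @dist_lip _ _ d A v u hm nA.
case: hm => pos _ sym tri.
have h3 := tri u v s; have h4 := tri v u s; have h5 := sym u v; have h6 := pos u v.
rewrite /fA_pm_l1 /fA_plus /fA_minus.
set x := d u s in h3 h4 *; set y := d v s in h3 h4 *.
set p := dist_set d A u in h1 h2 *; set q := dist_set d A v in h1 h2 *.
case: (lerP 0 ((x + p) / 2 - (y + q) / 2)) => [/ger0_norm ->|/ltr0_norm ->];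
case: (lerP 0 ((x - p) / 2 - (y - q) / 2)) => [/ger0_norm ->|/ltr0_norm ->]; lra.
Qed.
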